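(* For every smooth closed plane curve parametrized by arc length with rotation number $n\ge1$, $4\pi^2 n\,|I_{-1}|\le I_0$.
   Context: A closed plane curve is a smooth map $\vec f:\mathbb{R}/L\mathbb{Z}\to\mathbb{R}^2$ parametrized by arc length $s$, where $L>0$ is its length. $\vec\nu$ is $\partial_s\vec f$ rotated counterclockwise by $\pi/2$, $\kappa=\partial_s^2\vec f\cdot\vec\nu$, $n=\frac1{2\pi}\int_0^L\kappa\,ds$, $A=-\frac12\int_0^L\vec f\cdot\vec\nu\,ds$, $\tilde\kappa=\kappa-\frac1L\int_0^L\kappa\,ds$, $I_0=L\int_0^L\tilde\kappa^2\,ds$, and $I_{-1}=1-\frac{4n\pi A}{L^2}$. *)

(* Defs.v *)
From Stdlib Require Import Reals Lra ClassicalEpsilon.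
Open Scope R_scope.

(* Total Riemann integral on [a,b]: the Riemann integral when f is Riemann
   integrable on [a,b] (its value does not depend on the integrability proof,
   RiemannInt_P5), and 0 otherwise.  All integrands below are continuous,
   hence integrable. *)
Definition Rint (f : R -> R) (a b : R) : R :=
  match excluded_middle_informative (exists pr : Riemann_integrable f a b, True) with
  | left H => RiemannInt (proj1_sig (constructive_indefinite_description _ H))
  | right _ => 0
  end.

(* d is the sequence of all derivatives of d 0: d (S k) is the derivative of
   d k everywhere.  So "exists d, d 0 = g /\ is_deriv_seq d" means g is C^oo. *)
Definition is_deriv_seq (d : nat -> R -> R) : Prop :=
  forall (k : nat) (x : R), derivable_pt_lim (d k) x (d (S k) x).

(* A smooth closed plane curve f = (d1 0, d2 0) : R/LZ -> R^2 parametrized by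
   arc length, given with its derivative sequences d1, d2. *)
Definition arclength_closed_curve (L : R) (d1 d2 : nat -> R -> R) : Prop :=
  0 < L /\ is_deriv_seq d1 /\ is_deriv_seq d2 /\
  (forall s, d1 0%nat (s + L) = d1 0%nat s /\ d2 0%nat (s + L) = d2 0%nat s) /\
  (forall s, (d1 1%nat s) ^ 2 + (d2 1%nat s) ^ 2 = 1).

Definition nu1 (d1 d2 : nat -> R -> R) (s : R) : R := - d2 1%nat s.
Definition nu2 (d1 d2 : nat -> R -> R) (s : R) : R := d1 1%nat s.

Definition kappa (d1 d2 : nat -> R -> R) (s : R) : R :=
  d1 2%nat s * nu1 d1 d2 s + d2 2%nat s * nu2 d1 d2 s.

Definition rot_number (L : R) (d1 d2 : nat -> R -> R) : R :=
  / (2 * PI) * Rint (kappa d1 d2) 0 L.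

Definition area (L : R) (d1 d2 : nat -> R -> R) : R :=
  - / 2 * Rint (fun s => d1 0%nat s * nu1 d1 d2 s + d2 0%nat s * nu2 d1 d2 s) 0 L.

Definition kappa_tilde (L : R) (d1 d2 : nat -> R -> R) (s : R) : R :=
  kappa d1 d2 s - / L * Rint (kappa d1 d2) 0 L.

Definition I0 (L : R) (d1 d2 : nat -> R -> R) : R :=
  L * Rint (fun s => (kappa_tilde L d1 d2 s) ^ 2) 0 L.

Definition Im1 (L : R) (d1 d2 : nat -> R -> R) : R :=
  1 - 4 * rot_number L d1 d2 * PI * area L d1 d2 / L ^ 2.

(* Main.v *)
Require Import Defs.
From Stdlib Require Import Reals Lra ClassicalEpsilon FunctionalExtensionality.
From Coquelicot Require Import Coquelicot.
Open Scope R_scope.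

Lemma cont_of_ex (f : R -> R) x : ex_derive f x -> continuous f x.
Proof. apply (@ex_derive_continuous R_AbsRing R_NormedModule). Qed.

Lemma exint (f : R -> R) a b : (forall x, continuous f x) -> ex_RInt f a b.
Proof. intros H; apply (@ex_RInt_continuous R_CompleteNormedModule); intros; apply H. Qed.

Lemma Rint_RInt (f : R -> R) a b : (forall x, continuous f x) -> Rint f a b = RInt f a b.
Proof.
  intros H. unfold Rint.
  destruct (excluded_middle_informative _) as [e|Hn].
    symmetry; apply RInt_Reals.
  - exfalso; apply Hn. exists (ex_RInt_Reals_0 _ _ _ (exint f a b H)); auto.
Qed.

Lemma FTC (F f : R -> R) a b : (forall x, is_derive F x (f x)) -> (forall x, continuous f x) ->
  RInt f a b = F b - F a.
Proof.
  intros H1 H2. apply is_RInt_unique. apply (is_RInt_derive F f); intros; auto.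
Qed.

Lemma RInt_plus' (f g : R -> R) a b : (forall x, continuous f x) -> (forall x, continuous g x) ->
  RInt (fun x => f x + g x) a b = RInt f a b + RInt g a b.
Proof. intros; apply (RInt_plus f g); apply exint; auto. Qed.

Lemma RInt_minus' (f g : R -> R) a b : (forall x, continuous f x) -> (forall x, continuous g x) ->
  RInt (fun x => f x - g x) a b = RInt f a b - RInt g a b.
Proof. intros; apply (RInt_minus f g); apply exint; auto. Qed.

Lemma RInt_scal' (f : R -> R) c a b : (forall x, continuous f x) ->
  RInt (fun x => c * f x) a b = c * RInt f a b.
Proof. intros; apply (RInt_scal f); apply exint; auto. Qed.

Lemma RInt_const' c a b : RInt (fun _ => c) a b = (b - a) * c.
Proof. rewrite RInt_const. reflexivity. Qed.

Lemma RInt_le' (f g : R -> R) a b : a <= b -> (forall x, continuous f x) -> (forall x, continuous g x) ->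
  (forall x, f x <= g x) -> RInt f a b <= RInt g a b.
Proof. intros; apply RInt_le; auto; apply exint; auto. Qed.

Lemma shiftint (F : R -> R) L a : (forall x, continuous F x) -> (forall x, F (x + L) = F x) ->
  RInt F a (a + L) = RInt F 0 L.
Proof.
  intros Hc Hp.
  rewrite <- (RInt_Chasles F a L (a+L)) by (apply exint; auto).
  rewrite <- (RInt_Chasles F 0 a L) by (apply exint; auto).
  assert (E : RInt F L (a + L) = RInt F 0 a).
  { assert (E2 := RInt_comp_lin F 1 L 0 a (exint _ _ _ Hc)).
    replace (1 * 0 + L) with L in E2 by ring.
    replace (1 * a + L) with (a + L) in E2 by ring.
    rewrite <- E2. apply RInt_ext. intros x _. unfold scal; simpl; unfold mult; simpl.
    rewrite Rmult_1_l. replace (1 * x + L) with (x + L) by ring. apply Hp. }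
  rewrite E. unfold plus; simpl. ring.
Qed.

Lemma RInt_ext' (f g : R -> R) a b : (forall x : R, f x = g x) -> RInt f a b = RInt g a b.
Proof. intros H; apply RInt_ext; intros; apply H. Qed.

Lemma limit_mu B C : 0 <= C -> (forall mu, 0 < mu < 1 -> mu^2 * B <= C) -> B <= C.
Proof.
  intros HC H. destruct (Rle_or_lt B C) as [h|h]; auto.
  exfalso. assert (HB : 0 < B) by lra.
  set (r := C / B).
  assert (Hr0 : 0 <= r) by (unfold r; apply Rdiv_le_0_compat; lra).
  assert (Hr1 : r < 1) by (unfold r; apply (Rmult_lt_reg_r B); [lra|]; field_simplify; lra).
  specialize (H ((1 + r)/2)). assert (C = r * B) by (unfold r; field; lra).
  assert (((1 + r) / 2) ^ 2 * B <= C) by (apply H; lra).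
  nra.
Qed.

Lemma dirichlet_mu (h h' : R -> R) p P mu : 0 < P -> 0 < mu < 1 ->
  (forall x, is_derive h x (h' x)) -> (forall x, ex_derive h' x) ->
  h p = 0 -> h (p + P) = 0 ->
  (mu * PI / P)^2 * RInt (fun x => h x ^ 2) p (p + P) <= RInt (fun x => h' x ^ 2) p (p + P).
Proof.
  intros HP Hmu Hd Hd' H0 H1.
  assert (Hex : forall x, ex_derive h x) by (intro x; exists (h' x); auto).
  assert (Hdu : forall x, Derive h x = h' x) by (intro; apply is_derive_unique; auto).
  set (al := mu * PI / P).
  set (de := (1 - mu) * PI / 2).
  set (th := fun x => al * (x - p) + de).
  set (W := fun x => al * cos (th x) / sin (th x) * h x ^ 2).
  set (W' := fun x => - al^2 * h x ^ 2 / (sin (th x))^2 + 2 * (al * cos (th x) / sin (th x)) * h x * h' x).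
  assert (Hpi := PI_RGT_0).
  assert (Hal : 0 < al) by (unfold al; apply Rdiv_lt_0_compat; nra).
  assert (Hs : forall x, p <= x <= p + P -> 0 < sin (th x)).
  { intros x Hx. assert (0 < (1-mu)*PI) by (apply Rmult_lt_0_compat; lra). apply sin_gt_0; unfold th, al, de.
    - assert (0 <= mu * PI / P * (x - p)) by (apply Rmult_le_pos; [left; apply Rdiv_lt_0_compat; nra| lra]). lra.
    - assert (mu * PI / P * (x - p) <= mu * PI) .
      { replace (mu * PI) with (mu * PI / P * P) at 2 by (field; lra).
        apply Rmult_le_compat_l; [left; apply Rdiv_lt_0_compat; nra| lra]. }
      lra. }
  assert (HW : forall x, Rmin p (p + P) <= x <= Rmax p (p + P) -> is_derive W x (W' x)).
  { intros x Hx. rewrite Rmin_left in Hx by lra. rewrite Rmax_right in Hx by lra.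
    assert (S := Hs x Hx). unfold W, W', th in *. auto_derive.
    - repeat split; auto. replace (x + - p) with (x - p) by ring. lra.
    - rewrite Hdu. replace (x + - p) with (x - p) by ring.
      assert (Hsc := sin2_cos2 (al * (x - p) + de)). unfold Rsqr in Hsc.
      set (sn := sin (al * (x - p) + de)) in *. set (cs := cos (al * (x - p) + de)) in *.
      assert (E : cs ^ 2 = 1 - sn ^ 2) by nra. field_simplify; try lra. rewrite E. field. lra. }
  assert (HWc : forall x, Rmin p (p + P) <= x <= Rmax p (p + P) -> continuous W' x).
  { intros x Hx. rewrite Rmin_left in Hx by lra. rewrite Rmax_right in Hx by lra.
    assert (S := Hs x Hx). unfold W', th in *. apply cont_of_ex. auto_derive.
    repeat split; auto; replace (x + - p) with (x - p) by ring; try lra. rewrite Rmult_1_r; apply Rmult_integral_contrapositive_currified; lra. }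
  assert (HI : RInt W' p (p + P) = 0).
  { apply is_RInt_unique. replace 0 with (minus (W (p + P)) (W p)).
    - apply (is_RInt_derive W W'); auto.
    - unfold W, minus, plus, opp; simpl. rewrite H0, H1. ring. }
  assert (Hle : RInt W' p (p + P) <= RInt (fun x => h' x ^ 2 - al ^ 2 * h x ^ 2) p (p + P)).
  { apply RInt_le.
    - lra.
    - apply (@ex_RInt_continuous R_CompleteNormedModule); auto.
    - apply exint. intro x. apply cont_of_ex. auto_derive. auto.
    - intros x Hx. assert (S := Hs x (conj (Rlt_le _ _ (proj1 Hx)) (Rlt_le _ _ (proj2 Hx)))).
      unfold W', th. unfold th in S.
      assert (Hsc := sin2_cos2 (al * (x - p) + de)). unfold Rsqr in Hsc.
      set (sn := sin (al * (x - p) + de)) in *. set (cs := cos (al * (x - p) + de)) in *.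
      assert (E : h' x ^ 2 - al ^ 2 * h x ^ 2 - (- al ^ 2 * h x ^ 2 / sn ^ 2 + 2 * (al * cs / sn) * h x * h' x)
                = (h' x - al * cs / sn * h x) ^ 2).
      { assert (E : cs ^ 2 = 1 - sn ^ 2) by nra. field_simplify; try lra. rewrite E. field. lra. }
      assert (0 <= (h' x - al * cs / sn * h x) ^ 2) by (apply pow2_ge_0). lra. }
  rewrite RInt_minus', RInt_scal' in Hle.
  - unfold al in *. lra.
  - intro x; apply cont_of_ex; auto_derive; auto.
  - intro x; apply cont_of_ex; auto_derive; auto.
  - intro x; apply cont_of_ex; auto_derive; auto.
Qed.

Lemma dirichlet (h h' : R -> R) p P : 0 < P ->
  (forall x, is_derive h x (h' x)) -> (forall x, ex_derive h' x) ->
  h p = 0 -> h (p + P) = 0 ->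
  RInt (fun x => h x ^ 2) p (p + P) <= (P / PI)^2 * RInt (fun x => h' x ^ 2) p (p + P).
Proof.
  intros HP Hd Hd' H0 H1.
  assert (Hpi := PI_RGT_0).
  assert (HC : 0 <= RInt (fun x => h' x ^ 2) p (p + P)).
  { assert (Z := RInt_const' 0 p (p+P)). replace ((p+P-p)*0) with 0 in Z by ring. rewrite <- Z.
    apply RInt_le'; [lra| intro; apply continuous_const | |intro; apply pow2_ge_0].
    intro x; apply cont_of_ex; auto_derive; auto. }
  set (B := RInt (fun x => h x ^ 2) p (p + P)) in *.
  set (C := RInt (fun x => h' x ^ 2) p (p + P)) in *.
  assert (Hl : (PI / P) ^ 2 * B <= C).
  { apply limit_mu; auto. intros mu Hmu.
    assert (T := dirichlet_mu h h' p P mu HP Hmu Hd Hd' H0 H1). fold B C in T.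
    replace (mu ^ 2 * ((PI / P) ^ 2 * B)) with ((mu * PI / P) ^ 2 * B) by (field; lra). auto. }
  replace B with ((P / PI) ^ 2 * ((PI / P) ^ 2 * B)) by (field; split; lra).
  apply Rmult_le_compat_l; auto. apply pow2_ge_0.
Qed.

Lemma wirtinger (g g' : R -> R) L : 0 < L ->
  (forall x, is_derive g x (g' x)) -> (forall x, ex_derive g' x) ->
  (forall x, g (x + L) = g x) -> (forall x, g' (x + L) = g' x) ->
  exists c, RInt (fun s => (g s - c) ^ 2) 0 L <= (L / (2 * PI)) ^ 2 * RInt (fun s => g' s ^ 2) 0 L.
Proof.
  intros HL Hd Hd' Hp Hp'.
  assert (Hpi := PI_RGT_0).
  assert (Hex : forall x, ex_derive g x) by (intro x; exists (g' x); auto).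
  set (phi := fun s => g (s + L / 2) - g s).
  assert (Hphi : forall x, continuous phi x).
  { intro x; apply cont_of_ex; unfold phi; auto_derive; auto. }
  assert (E2 : phi (L / 2) = - phi 0).
  { unfold phi. replace (L / 2 + L / 2) with (0 + L) by field. rewrite Hp.
    replace (0 + L / 2) with (L / 2) by ring. ring. }
  destruct (IVT_gen_consistent phi 0 (L / 2) 0 Hphi) as [a [_ Ha]].
  { rewrite E2. destruct (Rle_or_lt 0 (phi 0)).
    - rewrite Rmin_right by lra. rewrite Rmax_left by lra. lra.
    - rewrite Rmin_left by lra. rewrite Rmax_right by lra. lra. }
  exists (g a).
  set (h := fun s => g s - g a).
  assert (Hdh : forall x, is_derive h x (g' x)).
  { intro x. unfold h. auto_derive; auto. assert (Hu : forall y, Derive g y = g' y) by (intro; apply is_derive_unique; auto). rewrite Hu. ring. }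
  assert (HL2 : 0 < L / 2) by lra.
  assert (D1 := dirichlet h g' a (L / 2) HL2 Hdh Hd').
  assert (D2 := dirichlet h g' (a + L / 2) (L / 2) HL2 Hdh Hd').
  assert (ha0 : h a = 0) by (unfold h; ring).
  assert (ha1 : h (a + L / 2) = 0) by (unfold h; unfold phi in Ha; lra).
  assert (ha2 : h (a + L / 2 + L / 2) = 0).
  { unfold h. replace (a + L / 2 + L / 2) with (a + L) by field. rewrite Hp. ring. }
  specialize (D1 ha0 ha1). specialize (D2 ha1 ha2).
  replace (a + L / 2 + L / 2) with (a + L) in D2 by field.
  assert (Ch : forall x, continuous (fun x => h x ^ 2) x).
  { intro x; apply cont_of_ex; unfold h; auto_derive; auto. }
  assert (Cg : forall x, continuous (fun x => g' x ^ 2) x).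
  { intro x; apply cont_of_ex; auto_derive; auto. }
  assert (S1 : RInt (fun x => h x ^ 2) a (a + L) = RInt (fun x => h x ^ 2) a (a + L / 2) + RInt (fun x => h x ^ 2) (a + L / 2) (a + L)).
  { symmetry. apply (RInt_Chasles (fun x => h x ^ 2)); apply exint; auto. }
  assert (S2 : RInt (fun x => g' x ^ 2) a (a + L) = RInt (fun x => g' x ^ 2) a (a + L / 2) + RInt (fun x => g' x ^ 2) (a + L / 2) (a + L)).
  { symmetry. apply (RInt_Chasles (fun x => g' x ^ 2)); apply exint; auto. }
  assert (T1 : RInt (fun x => h x ^ 2) a (a + L) = RInt (fun x => h x ^ 2) 0 L).
  { apply shiftint; auto. intro x. unfold h. rewrite Hp. reflexivity. }
  assert (T2 : RInt (fun x => g' x ^ 2) a (a + L) = RInt (fun x => g' x ^ 2) 0 L).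
  { apply shiftint; auto. intro x. rewrite Hp'. reflexivity. }
  replace (RInt (fun s => (g s - g a) ^ 2) 0 L) with (RInt (fun x => h x ^ 2) 0 L) by reflexivity.
  replace (L / (2 * PI)) with (L / 2 / PI) by (field; lra).
  rewrite <- T1, <- T2, S1, S2, Rmult_plus_distr_l. lra.
Qed.

Lemma seq_der (d : nat -> R -> R) : is_deriv_seq d -> forall k x, is_derive (d k) x (d (S k) x).
Proof. intros H k x. apply is_derive_Reals. apply H. Qed.

Lemma seq_ex (d : nat -> R -> R) : is_deriv_seq d -> forall k x, ex_derive (d k) x.
Proof. intros H k x. exists (d (S k) x). apply seq_der; auto. Qed.

Lemma seq_Derive (d : nat -> R -> R) : is_deriv_seq d -> forall k x, Derive (d k) x = d (S k) x.
Proof. intros H k x. apply is_derive_unique. apply seq_der; auto. Qed.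

Lemma seq_per (d : nat -> R -> R) L : is_deriv_seq d -> (forall s, d 0%nat (s + L) = d 0%nat s) ->
  forall k s, d k (s + L) = d k s.
Proof.
  intros H H0 k. induction k as [|k IH]; auto.
  intro s.
  assert (E1 : is_derive (fun s => d k (s + L)) s (d (S k) (s + L))).
  { auto_derive. apply (seq_ex d H). rewrite (seq_Derive d H). ring. }
  apply (is_derive_ext _ (d k)) in E1; [|intro; apply IH].
  apply is_derive_unique in E1. rewrite (seq_Derive d H) in E1. auto.
Qed.

Lemma orth (d1 d2 : nat -> R -> R) : is_deriv_seq d1 -> is_deriv_seq d2 ->
  (forall s, d1 1%nat s ^ 2 + d2 1%nat s ^ 2 = 1) ->
  forall s, d1 1%nat s * d1 2%nat s + d2 1%nat s * d2 2%nat s = 0.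
Proof.
  intros H1 H2 Hu s.
  assert (E1 : is_derive (fun s => d1 1%nat s ^ 2 + d2 1%nat s ^ 2) s (2 * (d1 1%nat s * d1 2%nat s + d2 1%nat s * d2 2%nat s))).
  { auto_derive. split; [apply (seq_ex d1 H1)|split; [apply (seq_ex d2 H2)|auto]].
    rewrite (seq_Derive d1 H1), (seq_Derive d2 H2). ring. }
  apply (is_derive_ext _ (fun _ => 1)) in E1; [|intro; apply Hu].
  apply is_derive_unique in E1. rewrite Derive_const in E1. lra.
Qed.

Lemma ptw1 t u1 u2 a b : 0 < t -> u1 * a - u2 * b <= t / 2 * (u1 ^ 2 + u2 ^ 2) + 1 / (2 * t) * (b ^ 2 + a ^ 2).
Proof.
  intros Ht.
  assert (E : t / 2 * (u1 ^ 2 + u2 ^ 2) + 1 / (2 * t) * (b ^ 2 + a ^ 2) - (u1 * a - u2 * b)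
     = ((t * u1 - a) ^ 2 + (t * u2 + b) ^ 2) / (2 * t)) by (field; lra).
  assert (0 <= ((t * u1 - a) ^ 2 + (t * u2 + b) ^ 2) / (2 * t)).
  { apply Rdiv_le_0_compat; [|lra]. assert (H1 := pow2_ge_0 (t * u1 - a)). assert (H2 := pow2_ge_0 (t * u2 + b)). lra. }
  lra.
Qed.

Lemma ptw2 t u1 u2 a b : 0 < t -> -1 * (t / 2 * (u1 ^ 2 + u2 ^ 2) + 1 / (2 * t) * (b ^ 2 + a ^ 2)) <= u1 * a - u2 * b.
Proof.
  intros Ht.
  assert (E : t / 2 * (u1 ^ 2 + u2 ^ 2) + 1 / (2 * t) * (b ^ 2 + a ^ 2) + (u1 * a - u2 * b)
     = ((t * u1 + a) ^ 2 + (t * u2 - b) ^ 2) / (2 * t)) by (field; lra).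
  assert (0 <= ((t * u1 + a) ^ 2 + (t * u2 - b) ^ 2) / (2 * t)).
  { apply Rdiv_le_0_compat; [|lra]. assert (H1 := pow2_ge_0 (t * u1 + a)). assert (H2 := pow2_ge_0 (t * u2 - b)). lra. }
  lra.
Qed.

Ltac rq := match goal with |- ?a = ?b => change (@eq R a b) end.

Theorem mainTheorem5 (L : R) (d1 d2 : nat -> R -> R) :
  arclength_closed_curve L d1 d2 ->
  1 <= rot_number L d1 d2 ->
  4 * PI ^ 2 * rot_number L d1 d2 * Rabs (Im1 L d1 d2) <= I0 L d1 d2.
Proof.
  intros [HL [H1 [H2 [Hper Hu]]]] Hn.
  assert (Hpi := PI_RGT_0).
  assert (Ex1 := seq_ex d1 H1). assert (Ex2 := seq_ex d2 H2).
  assert (Dv1 := seq_Derive d1 H1). assert (Dv2 := seq_Derive d2 H2).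
  assert (Pe1 := seq_per d1 L H1 (fun s => proj1 (Hper s))).
  assert (Pe2 := seq_per d2 L H2 (fun s => proj2 (Hper s))).
  assert (Pz1 : forall k, d1 k L = d1 k 0) by (intro k; rewrite <- (Pe1 k 0); f_equal; ring).
  assert (Pz2 : forall k, d2 k L = d2 k 0) by (intro k; rewrite <- (Pe2 k 0); f_equal; ring).
  assert (Ho := orth d1 d2 H1 H2 Hu).
  assert (Hk : forall s, kappa d1 d2 s = - d1 2%nat s * d2 1%nat s + d2 2%nat s * d1 1%nat s)
    by (intro; unfold kappa, nu1, nu2; ring).
  assert (Exk : forall s, ex_derive (kappa d1 d2) s).
  { intro s. apply (ex_derive_ext (fun s => - d1 2%nat s * d2 1%nat s + d2 2%nat s * d1 1%nat s)).
    - intro; symmetry; apply Hk.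
    - auto_derive. repeat split; auto. }
  assert (Hx2 : forall s, d1 2%nat s = - kappa d1 d2 s * d2 1%nat s).
  { intro s. rewrite Hk.
    assert (E : d1 2%nat s - (- (- d1 2%nat s * d2 1%nat s + d2 2%nat s * d1 1%nat s) * d2 1%nat s)
      = d1 1%nat s * (d1 1%nat s * d1 2%nat s + d2 1%nat s * d2 2%nat s) + d1 2%nat s * (1 - (d1 1%nat s ^ 2 + d2 1%nat s ^ 2))) by ring.
    rewrite Ho, Hu in E. lra. }
  assert (Hy2 : forall s, d2 2%nat s = kappa d1 d2 s * d1 1%nat s).
  { intro s. rewrite Hk.
    assert (E : d2 2%nat s - ((- d1 2%nat s * d2 1%nat s + d2 2%nat s * d1 1%nat s) * d1 1%nat s)
      = d2 1%nat s * (d1 1%nat s * d1 2%nat s + d2 1%nat s * d2 2%nat s) + d2 2%nat s * (1 - (d1 1%nat s ^ 2 + d2 1%nat s ^ 2))) by ring.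
    rewrite Ho, Hu in E. lra. }
  Ltac cont := intro; apply cont_of_ex; auto_derive; repeat split; auto.
  assert (HK : Rint (kappa d1 d2) 0 L = RInt (kappa d1 d2) 0 L) by (apply Rint_RInt; cont).
  set (K := RInt (kappa d1 d2) 0 L) in *.
  set (Av := RInt (fun s => d1 0%nat s * d2 1%nat s - d2 0%nat s * d1 1%nat s) 0 L).
  assert (HA : Rint (fun s => d1 0%nat s * nu1 d1 d2 s + d2 0%nat s * nu2 d1 d2 s) 0 L = -1 * Av).
  { rewrite Rint_RInt by (unfold nu1, nu2; cont). unfold Av. rewrite <- RInt_scal' by cont.
    apply RInt_ext'; intros; unfold nu1, nu2; ring. }
  set (kb := K / L).
  set (Q := RInt (fun s => (kappa d1 d2 s - kb) ^ 2) 0 L).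
  assert (HQ : Rint (fun s => kappa_tilde L d1 d2 s ^ 2) 0 L = Q).
  { rewrite Rint_RInt by (unfold kappa_tilde; cont). unfold Q.
    apply RInt_ext'; intros; unfold kappa_tilde; rewrite HK; unfold kb, K; f_equal; field; lra. }
  unfold Im1, area, I0. unfold rot_number in Hn |- *. rewrite HK in Hn |- *. rewrite HA, HQ. Show.
  set (t := L / (2 * PI)).
  assert (Ht : 0 < t) by (unfold t; apply Rdiv_lt_0_compat; lra).
  assert (HK0 : 2 * PI <= K).
  { replace K with (2 * PI * (/ (2 * PI) * K)) by (field; lra). nra. }
  destruct (wirtinger (fun s => d1 1%nat s + kb * d2 0%nat s) (fun s => d1 2%nat s + kb * d2 1%nat s) L HL) as [c1 W1].
  { intro x. auto_derive; [repeat split; auto|]. rewrite Dv1, Dv2. ring. }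
  { intro x. auto_derive. repeat split; auto. }
  { intro x. rewrite Pe1, Pe2. reflexivity. }
  { intro x. rewrite Pe1, Pe2. reflexivity. }
  destruct (wirtinger (fun s => d2 1%nat s - kb * d1 0%nat s) (fun s => d2 2%nat s - kb * d1 1%nat s) L HL) as [c2 W2].
  { intro x. auto_derive; [repeat split; auto|]. rewrite Dv1, Dv2. ring. }
  { intro x. auto_derive. repeat split; auto. }
  { intro x. rewrite Pe1, Pe2. reflexivity. }
  { intro x. rewrite Pe1, Pe2. reflexivity. }
  assert (HE : RInt (fun s => (d1 2%nat s + kb * d2 1%nat s) * ((d2 1%nat s - kb * d1 0%nat s) - c2)
                   - (d2 2%nat s - kb * d1 1%nat s) * ((d1 1%nat s + kb * d2 0%nat s) - c1)) 0 L
             = K - kb ^ 2 * Av).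
  { rewrite (RInt_ext' _ (fun s => -1 * kappa d1 d2 s + 2 * kb
        + (-kb) * (d1 1%nat s * d1 1%nat s + d1 0%nat s * d1 2%nat s + (d2 1%nat s * d2 1%nat s + d2 0%nat s * d2 2%nat s))
        + (- kb ^ 2) * (d1 0%nat s * d2 1%nat s - d2 0%nat s * d1 1%nat s)
        + (- c2) * (d1 2%nat s + kb * d2 1%nat s) + c1 * (d2 2%nat s - kb * d1 1%nat s))).
    2: { intro s. apply Rminus_diag_uniq. rewrite !Hx2, !Hy2.
         transitivity ((kappa d1 d2 s - 2 * kb) * (1 - (d1 1%nat s ^ 2 + d2 1%nat s ^ 2))); [ring| rewrite Hu; ring]. }
    repeat rewrite RInt_plus' by cont.
    repeat rewrite RInt_scal' by cont.
    assert (I1 : RInt (fun x : R => d1 1%nat x * d1 1%nat x + d1 0%nat x * d1 2%nat x +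
       (d2 1%nat x * d2 1%nat x + d2 0%nat x * d2 2%nat x)) 0 L = 0).
    { rewrite (FTC (fun x => d1 0%nat x * d1 1%nat x + d2 0%nat x * d2 1%nat x)).
      - rewrite !Pz1, !Pz2. rq. ring.
      - intro x. auto_derive; [repeat split; auto|]. rewrite !Dv1, !Dv2. ring.
      - cont. }
    assert (I2 : RInt (fun x : R => d1 2%nat x + kb * d2 1%nat x) 0 L = 0).
    { rewrite (FTC (fun x => d1 1%nat x + kb * d2 0%nat x)).
      - rewrite !Pz1, !Pz2. rq. ring.
      - intro x. auto_derive; [repeat split; auto|]. rewrite !Dv1, !Dv2. ring.
      - cont. }
    assert (I3 : RInt (fun x : R => d2 2%nat x - kb * d1 1%nat x) 0 L = 0).
    { rewrite (FTC (fun x => d2 1%nat x - kb * d1 0%nat x)).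
      - rewrite !Pz1, !Pz2. rq. ring.
      - intro x. auto_derive; [repeat split; auto|]. rewrite !Dv1, !Dv2. ring.
      - cont. }
    rewrite I1, I2, I3, RInt_const'. fold K Av. unfold kb. rq. field. lra. }
  fold t in W1. fold t in W2.
  assert (HR1 : RInt (fun s => (d1 2%nat s + kb * d2 1%nat s) * ((d2 1%nat s - kb * d1 0%nat s) - c2)
                   - (d2 2%nat s - kb * d1 1%nat s) * ((d1 1%nat s + kb * d2 0%nat s) - c1)) 0 L
     <= RInt (fun s => t / 2 * ((d1 2%nat s + kb * d2 1%nat s) ^ 2 + (d2 2%nat s - kb * d1 1%nat s) ^ 2)
            + 1 / (2 * t) * ((d1 1%nat s + kb * d2 0%nat s - c1) ^ 2 + (d2 1%nat s - kb * d1 0%nat s - c2) ^ 2)) 0 L).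
  { apply RInt_le'; [lra|cont|cont|]. intro s. apply ptw1; auto. }
  assert (HR2 : RInt (fun s => -1 * (t / 2 * ((d1 2%nat s + kb * d2 1%nat s) ^ 2 + (d2 2%nat s - kb * d1 1%nat s) ^ 2)
            + 1 / (2 * t) * ((d1 1%nat s + kb * d2 0%nat s - c1) ^ 2 + (d2 1%nat s - kb * d1 0%nat s - c2) ^ 2))) 0 L
     <= RInt (fun s => (d1 2%nat s + kb * d2 1%nat s) * ((d2 1%nat s - kb * d1 0%nat s) - c2)
                   - (d2 2%nat s - kb * d1 1%nat s) * ((d1 1%nat s + kb * d2 0%nat s) - c1)) 0 L).
  { apply RInt_le'; [lra|cont|cont|]. intro s. apply ptw2; auto. }
  rewrite RInt_scal' in HR2 by cont.
  rewrite HE in HR1. rewrite HE in HR2.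
  rewrite RInt_plus', !RInt_scal', !RInt_plus' in HR1 by cont. rewrite RInt_plus', !RInt_scal', !RInt_plus' in HR2 by cont.
  assert (HG : RInt (fun s => (d1 2%nat s + kb * d2 1%nat s) ^ 2) 0 L + RInt (fun s => (d2 2%nat s - kb * d1 1%nat s) ^ 2) 0 L = Q).
  { rewrite <- RInt_plus' by cont. unfold Q. apply RInt_ext'. intro s. rewrite Hx2, Hy2.
    transitivity ((kappa d1 d2 s - kb) ^ 2 * (d1 1%nat s ^ 2 + d2 1%nat s ^ 2)); [ring| rewrite Hu; ring]. }
  set (G1 := RInt (fun s => (d1 2%nat s + kb * d2 1%nat s) ^ 2) 0 L) in *.
  set (G2 := RInt (fun s => (d2 2%nat s - kb * d1 1%nat s) ^ 2) 0 L) in *.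
  set (V1 := RInt (fun s => (d1 1%nat s + kb * d2 0%nat s - c1) ^ 2) 0 L) in *.
  set (V2 := RInt (fun s => (d2 1%nat s - kb * d1 0%nat s - c2) ^ 2) 0 L) in *.
  assert (Hm : 1 / (2 * t) * (V1 + V2) <= 1 / (2 * t) * (t ^ 2 * G1 + t ^ 2 * G2)).
  { apply Rmult_le_compat_l; [left; apply Rdiv_lt_0_compat; lra| lra]. }
  assert (Hm2 : 1 / (2 * t) * (t ^ 2 * G1 + t ^ 2 * G2) = t / 2 * (G1 + G2)) by (field; lra).
  assert (Hb : Rabs (K - kb ^ 2 * Av) <= t * Q).
  { apply Rabs_le. assert (t / 2 * (G1 + G2) = t * Q / 2) by (rewrite HG; field). split; lra. }
  assert (Harg : 1 - 4 * (/ (2 * PI) * K) * PI * (- / 2 * (-1 * Av)) / L ^ 2 = (K - kb ^ 2 * Av) / K).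
  { unfold kb. field. split; lra. }
  rewrite Harg. unfold Rdiv. rewrite Rabs_mult, (Rabs_inv K), (Rabs_pos_eq K) by lra.
  replace (4 * PI ^ 2 * (/ (2 * PI) * K) * (Rabs (K - kb ^ 2 * Av) * / K)) with (2 * PI * Rabs (K - kb ^ 2 * Av)) by (field; split; lra).
  replace (L * Q) with (2 * PI * (t * Q)) by (unfold t; field; lra).
  apply Rmult_le_compat_l; lra.
Qed.
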